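(* Let $f$ be a stable update function. For every $\delta>0$ there exists $0<c_0<1$ such that the following holds: if $\vec u_i,\vec u_j\in\mathbb S^{d-1}$ have effective angle $\gamma=\gamma(\vec u_i,\vec u_j)\le\frac{\pi}{2}-\delta$, and $\vec u_i'=\vec w/\|\vec w\|$ with $\vec w=\vec u_i+f(\langle\vec u_i,\vec u_j\rangle)\vec u_j$, then the new effective angle $\gamma'=\gamma(\vec u_i',\vec u_j)$ satisfies $\gamma'\le c_0\gamma$.
   Context: $f:[-1,1]\to\mathbb R$ is stable if continuous and $\operatorname{sign}f(A)=\operatorname{sign}A$ for all $A\in[-1,1]$. The angle is $\alpha(\vec u,\vec v)=\arccos\langle\vec u,\vec v\rangle\in[0,\pi]$ and the effective angle is $\gamma(\vec u,\vec v)=\min(\alpha(\vec u,\vec v),\pi-\alpha(\vec u,\vec v))$. *)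

(* Defs.v *)
From HB Require Import structures.
From mathcomp Require Import all_boot all_order all_algebra.
From mathcomp Require Import all_classical all_reals all_analysis.
Set Implicit Arguments. Unset Strict Implicit. Unset Printing Implicit Defensive.
Import Order.TTheory GRing.Theory Num.Theory.
Import numFieldNormedType.Exports.
Local Open Scope ring_scope.
Local Open Scope classical_set_scope.

Definition dotp {R : realType} {d : nat} (u v : 'rV[R]_d) : R := (u *m v^T) 0 0.

Definition enorm {R : realType} {d : nat} (u : 'rV[R]_d) : R := Num.sqrt (dotp u u).

Definition on_sphere {R : realType} {d : nat} (u : 'rV[R]_d) : Prop := dotp u u = 1.

(* stable update function f : [-1,1] -> R (given as a function on R, only its
   values on [-1,1] matter): continuous on [-1,1] and sign f(A) = sign A *)
Definition stable {R : realType} (f : R -> R) : Prop :=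
  {within `[-1, 1], continuous f} /\
  (forall A : R, -1 <= A <= 1 -> Num.sg (f A) = Num.sg A).

Definition angle {R : realType} {d : nat} (u v : 'rV[R]_d) : R := acos (dotp u v).
Definition eff_angle {R : realType} {d : nat} (u v : 'rV[R]_d) : R :=
  Num.min (angle u v) (pi - angle u v).

(* Main.v *)
Require Import Defs.
From HB Require Import structures.
From mathcomp Require Import all_boot all_order all_algebra.
From mathcomp Require Import all_classical all_reals all_analysis.
From mathcomp Require Import lra ring.
Import Order.TTheory GRing.Theory Num.Theory.
Import numFieldNormedType.Exports.
Local Open Scope ring_scope.
Local Open Scope classical_set_scope.
Set Implicit Arguments. Unset Strict Implicit.
Section S.
Variable R : realType.

Lemma hder (c t : R) : is_derive t 1 (fun x => sin (c * x) - c * sin x)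
   (c * cos (c * t) - c * cos t).
Proof.
have h1 := is_deriveZ c (@is_derive_id _ R t 1).
have h2 := is_derive1_comp (is_derive_sin ((c \*: id) t)) h1.
have h3 : is_derive t 1 (c \*: sin) (c *: cos t).
  exact: is_deriveZ.
have h4 := is_deriveB h2 h3.
have -> : (fun x => sin (c * x) - c * sin x) = (sin \o (c \*: id)) - c \*: sin by apply/funext.
apply: (is_derive_eq h4).
by rewrite /= /GRing.scale /= mulr1 mulrC.
Qed.

Lemma L (c x : R) : 0 <= c <= 1 -> 0 <= x <= pi / 2 -> c * sin x <= sin (c * x).
Proof.
move=> /andP[c0 c1] /andP[x0 xp].
rewrite -subr_ge0.
pose h := fun x => sin (c * x) - c * sin x.
have : h 0 <= h x.
  apply: (@ger0_derive1_ndecr _ h 0 (pi/2)) => //.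
  - move=> y; rewrite in_itv /= => /andP[y0 yp].
    rewrite derive1E /h; have [_ ->] := hder c y.
    rewrite -mulrBr mulr_ge0 // subr_ge0.
    have pp : pi / 2 <= pi :> R by rewrite ler_pdivrMr // ler_peMr ?pi_ge0 // ler1n.
    have cy : c * y <= y by rewrite ler_piMl // ltW.
    have cy0 : 0 <= c * y by rewrite mulr_ge0 // ltW.
    have [->|cyl] := eqVneq (c*y) y; first by [].
    rewrite ltW // ltr_cos ?in_itv /= ?cy0 ?(ltW y0) ?(le_trans cy) ?(le_trans (ltW yp)) //.
    by rewrite lt_neqAle cyl cy.
  - apply: continuous_subspaceT => z.
    have [dh _] := hder c z.
    exact/differentiable_continuous/derivable1_diffP.
by rewrite /h mulr0 sin0 mulr0 subr0.
Qed.

Lemma normK (x : R) : `|x| ^+ 2 = x ^+ 2.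
Proof. exact: real_normK (num_real x). Qed.

Lemma pihalf_lepi : pi / 2 <= pi :> R.
Proof. by rewrite ler_pdivrMr // ler_peMr ?pi_ge0 // ler1n. Qed.

Lemma acos_le_pihalf (x : R) : 0 <= x <= 1 -> acos x <= pi / 2.
Proof.
move=> /andP[x0 x1].
have xr : -1 <= x <= 1 by rewrite x1 andbT (le_trans _ x0) // lerN10.
rewrite leNgt; apply/negP => H.
have : cos (acos x) < cos (pi / 2).
  rewrite ltr_cos ?in_itv /= ?acos_ge0 ?acos_lepi // ?pihalf_lepi ?divr_ge0 ?pi_ge0 //.
rewrite acosK ?in_itv //= cos_pihalf ltNge x0 //.
Qed.

Lemma core (A F m : R) : -1 <= A <= 1 -> 0 < m -> m <= `|F| -> 0 <= A * F ->
  acos `|(A + F) / Num.sqrt (1 + 2 * A * F + F ^+ 2)|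
   <= (Num.sqrt (1 + m ^+ 2))^-1 * acos `|A|.
Proof.
move=> Ar m0 mF AF.
set W := 1 + 2 * A * F + F ^+ 2.
set k := (Num.sqrt (1 + m ^+ 2))^-1.
have mF2 : m ^+ 2 <= F ^+ 2 by rewrite -(normK F); nra.
have W1 : 1 + m ^+ 2 <= W by rewrite /W; nra.
have W0 : 0 < W by nra.
have sW0 : 0 < Num.sqrt W by rewrite sqrtr_gt0.
have m21 : 0 < 1 + m ^+ 2 by nra.
have k2 : k ^+ 2 * (1 + m ^+ 2) = 1.
  by rewrite /k exprVn sqr_sqrtr ?ltW // mulVf // gt_eqF.
have k0 : 0 < k by rewrite invr_gt0 sqrtr_gt0.
have k1 : k <= 1.
  rewrite invf_le1 ?sqrtr_gt0 //.
  rewrite -[X in X <= _](sqrtr1 R) ler_sqrt //; nra.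
set A' := (A + F) / Num.sqrt W.
have key : 1 - A' ^+ 2 = (1 - A ^+ 2) / W.
  rewrite /A' exprMn exprVn sqr_sqrtr ?ltW //.
  apply: (@mulIf _ W); first by rewrite gt_eqF.
  rewrite mulrBl !mulfVK ?gt_eqF // mul1r /W; ring.
have X0 : 0 <= 1 - A ^+ 2 by nra.
have A'1 : `|A'| <= 1.
  have : 0 <= 1 - A' ^+ 2 by rewrite key divr_ge0 // ltW.
  rewrite -normK => h; have := normr_ge0 A'; nra.
have Ar' : 0 <= `|A| <= 1 by rewrite normr_ge0 ler_norml.
have Ar'' : 0 <= `|A'| <= 1 by rewrite normr_ge0 A'1.
set th := acos `|A|.
set th' := acos `|A'|.
have thr : 0 <= th <= pi / 2.
  by rewrite acos_le_pihalf // acos_ge0 // (le_trans _ (normr_ge0 A)) ?lerN10 //; case/andP: Ar'.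
have thr' : 0 <= th' <= pi / 2.
  by rewrite acos_le_pihalf // acos_ge0 // (le_trans _ (normr_ge0 A')) ?lerN10 //.
have cth : cos th = `|A|.
  by rewrite /th acosK // in_itv /= (le_trans _ (normr_ge0 A)) ?lerN10 //; case/andP: Ar'.
have cth' : cos th' = `|A'|.
  by rewrite /th' acosK // in_itv /= (le_trans _ (normr_ge0 A')) ?lerN10 //.
have [th0 thp] := andP thr.
have [th0' thp'] := andP thr'.
have kth : 0 <= k * th <= pi / 2.
  rewrite mulr_ge0 ?(ltW k0) //=.
  by apply: (le_trans _ thp); rewrite ler_piMl // ltW.
rewrite leNgt; apply/negP => H.
have hc : cos th' < cos (k * th).
  rewrite ltr_cos // in_itv /=.
    by case/andP: kth => -> /le_trans; apply; exact: pihalf_lepi.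
  by rewrite th0' (le_trans thp' pihalf_lepi).
rewrite cth' in hc.
have hc2 : `|A'| ^+ 2 < cos (k * th) ^+ 2.
  have := normr_ge0 A'; nra.
rewrite normK in hc2.
have hs : sin (k * th) ^+ 2 < (1 - A ^+ 2) / W.
  by rewrite -key sin2cos2; lra.
have hL : k * sin th <= sin (k * th) by apply: L; [rewrite (ltW k0) k1 | exact: thr].
have s0 : 0 <= sin th.
  by apply: sin_ge0_pi; rewrite th0 (le_trans thp pihalf_lepi).
have sth : sin th ^+ 2 = 1 - A ^+ 2 by rewrite sin2cos2 cth normK.
have ks0 : 0 <= k * sin th by rewrite mulr_ge0 ?(ltW k0).
have h1 : (k * sin th) ^+ 2 <= sin (k * th) ^+ 2 by nra.
rewrite exprMn sth in h1.
set X := 1 - A ^+ 2 in X0 key hs sth h1.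
set Y := X / W in hs.
have XY : X = Y * W by rewrite /Y mulfVK // gt_eqF.
have Y0 : 0 <= Y by rewrite /Y divr_ge0 // ltW.
rewrite XY in h1.
have kW : 1 <= k ^+ 2 * W by rewrite -k2; apply: ler_wpM2l => //; nra.
nra.
Qed.

Lemma dotpE d (u v : 'rV[R]_d) : dotp u v = \sum_j u 0 j * v 0 j.
Proof. by rewrite /dotp mxE; apply: eq_bigr => j _; rewrite mxE. Qed.

Lemma dotpC d (u v : 'rV[R]_d) : dotp u v = dotp v u.
Proof. by rewrite !dotpE; apply: eq_bigr => j _; rewrite mulrC. Qed.

Lemma dotpDl d (u v w : 'rV[R]_d) : dotp (u + v) w = dotp u w + dotp v w.
Proof. by rewrite !dotpE -big_split; apply: eq_bigr => j _; rewrite mxE mulrDl. Qed.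

Lemma dotpZl d a (u w : 'rV[R]_d) : dotp (a *: u) w = a * dotp u w.
Proof. by rewrite !dotpE mulr_sumr; apply: eq_bigr => j _; rewrite mxE mulrA. Qed.

Lemma dotpDr d (u v w : 'rV[R]_d) : dotp w (u + v) = dotp w u + dotp w v.
Proof. by rewrite dotpC dotpDl !(@dotpC _ w). Qed.

Lemma dotpZr d a (u w : 'rV[R]_d) : dotp w (a *: u) = a * dotp w u.
Proof. by rewrite dotpC dotpZl (@dotpC _ w). Qed.

Lemma dotpNl d (u w : 'rV[R]_d) : dotp (- u) w = - dotp u w.
Proof. by rewrite -scaleN1r dotpZl mulN1r. Qed.

Lemma dotpNr d (u w : 'rV[R]_d) : dotp w (- u) = - dotp w u.
Proof. by rewrite dotpC dotpNl (@dotpC _ w). Qed.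

Lemma dotp_ge0 d (u : 'rV[R]_d) : 0 <= dotp u u.
Proof. by rewrite dotpE; apply: sumr_ge0 => j _; rewrite -expr2 sqr_ge0. Qed.

Lemma cs d (u v : 'rV[R]_d) : on_sphere u -> on_sphere v -> -1 <= dotp u v <= 1.
Proof.
move=> hu hv.
have := @dotp_ge0 _ (u - dotp u v *: v).
rewrite dotpDl !dotpDr !dotpNl !dotpNr !dotpZl !dotpZr.
rewrite (@dotpC _ v u) hu hv => h.
rewrite -ler_norml; have := normr_ge0 (dotp u v); have := normK (dotp u v).
nra.
Qed.

Lemma eff_abs d (u v : 'rV[R]_d) : -1 <= dotp u v <= 1 ->
  eff_angle u v = acos `|dotp u v|.
Proof.
move=> hr; rewrite /eff_angle /angle.
set B := dotp u v in hr *.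
have [B0|B0] := leP 0 B.
  rewrite ger0_norm //.
  have h := @acos_le_pihalf B; case/andP: hr => _ h1.
  have {}h : acos B <= pi / 2 by apply: h; rewrite B0 h1.
  have -> : Num.min (acos B) (pi - acos B) = acos B.
    apply/min_idPl; lra.
  by [].
rewrite ltr0_norm // acosN //.
have h1 : 0 <= - B <= 1 by rewrite oppr_ge0 ltW //= lerNl; case/andP: hr.
have h := @acos_le_pihalf _ h1.
rewrite acosN // in h.
apply/min_idPr; lra.
Qed.

Lemma main_small (f : R -> R) :
  stable f ->
  forall delta : R, 0 < delta -> delta <= pi / 2 ->
  exists c0 : R, 0 < c0 < 1 /\
    forall (d : nat) (ui uj : 'rV[R]_d),
      on_sphere ui -> on_sphere uj ->
      eff_angle ui uj <= pi / 2 - delta ->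
      let w := ui + f (dotp ui uj) *: uj in
      let ui' := (enorm w)^-1 *: w in
      eff_angle ui' uj <= c0 * eff_angle ui uj.
Proof.
move=> [fc fs] delta d0 dp.
set s0 := cos (pi / 2 - delta).
have pi20 : 0 < pi / 2 :> R by rewrite divr_gt0 // pi_gt0.
have s00 : 0 < s0.
  apply: cos_gt0_pihalf; apply/andP; split; lra.
have s01 : s0 <= 1 by exact: cos_le1.
have sub1 : `[s0, 1] `<=` `[-1, 1].
  move=> x; rewrite /= !in_itv /= => /andP[h1 h2]; rewrite h2 andbT.
  by apply: le_trans h1; apply: le_trans (ltW s00); rewrite lerN10.
have sub2 : `[-1, - s0] `<=` `[-1, 1].
  move=> x; rewrite /= !in_itv /= => /andP[h1 h2]; rewrite h1 /=.
  apply: (le_trans h2); lra.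
have [c1 c1in c1min] := EVT_min s01 (continuous_subspaceW sub1 fc).
have [c2 c2in c2max] : exists2 c, c \in `[-1, - s0]%R & forall t, t \in `[-1, - s0]%R -> f t <= f c.
  apply: EVT_max; first lra.
  exact: (continuous_subspaceW sub2 fc).
have c1r : -1 <= c1 <= 1 by have := sub1 _ c1in; rewrite /= in_itv.
have c2r : -1 <= c2 <= 1 by have := sub2 _ c2in; rewrite /= in_itv.
have fc1 : 0 < f c1.
  rewrite -sgr_gt0 fs // sgr_gt0.
  by move: c1in; rewrite in_itv /= => /andP[h _]; lra.
have fc2 : f c2 < 0.
  rewrite -sgr_lt0 fs // sgr_lt0.
  by move: c2in; rewrite in_itv /= => /andP[_ h]; lra.
set m := Num.min (f c1) (- f c2).
have m0 : 0 < m by rewrite lt_min fc1 oppr_gt0 fc2.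
have m1 : m <= f c1 by rewrite ge_min lexx.
have m2 : m <= - f c2 by rewrite ge_min lexx orbT.
exists ((Num.sqrt (1 + m ^+ 2))^-1); split.
  rewrite invr_gt0 sqrtr_gt0 invf_lt1 ?sqrtr_gt0; last nra.
  apply/andP; split; first nra.
  rewrite -[X in X < _](sqrtr1 R) ltr_sqrt; nra.
move=> d ui uj hi hj heff; cbv zeta.
set w := ui + f (dotp ui uj) *: uj.
set ui' := (enorm w)^-1 *: w.
have Ar := cs hi hj.
rewrite eff_abs // in heff *.
set A := dotp ui uj in Ar heff w ui' *.
set F := f A in w ui' *.
have Aa : 0 <= `|A| <= 1 by rewrite normr_ge0 ler_norml.
have aS : s0 <= `|A|.
  rewrite leNgt; apply/negP => H.
  have : cos (acos `|A|) < cos (pi / 2 - delta).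
    rewrite acosK // in_itv /= (le_trans _ (normr_ge0 A)) ?lerN10 //; by case/andP: Aa.
  rewrite ltr_cos ?in_itv /=.
  - by move/(le_lt_trans heff); rewrite ltxx.
  - have := @pi_gt0 R; move=> ?; apply/andP; split; lra.
  - have Ar1 : -1 <= `|A| <= 1 by rewrite (le_trans _ (normr_ge0 A)) ?lerN10 //; case/andP: Aa.
    by rewrite acos_ge0 ?acos_lepi.
have [mF AF] : m <= `|F| /\ 0 <= A * F.
  have [A0|A0] := leP 0 A.
    have Ain : A \in `[s0, 1]%R by rewrite in_itv /= -(ger0_norm A0) aS; case/andP: Aa.
    have := c1min _ Ain; rewrite -/F => h.
    have F0 : 0 < F by lra.
    by rewrite gtr0_norm //; split; [lra | nra].
  have Ain : A \in `[-1, - s0]%R.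
    rewrite in_itv /=; case/andP: Ar => -> _ /=; rewrite (ltr0_norm A0) in aS; lra.
  have := c2max _ Ain; rewrite -/F => h.
  have F0 : F < 0 by lra.
  by rewrite ltr0_norm //; split; [lra | nra].
have Wdef : dotp w w = 1 + 2 * A * F + F ^+ 2.
  rewrite /w dotpDl !dotpDr !dotpZl !dotpZr hi hj (@dotpC _ uj ui) -/A; ring.
have wuj : dotp w uj = A + F by rewrite /w dotpDl dotpZl hj mulr1.
have W0 : 0 < 1 + 2 * A * F + F ^+ 2 by nra.
have ui'uj : dotp ui' uj = (A + F) / Num.sqrt (1 + 2 * A * F + F ^+ 2).
  by rewrite /ui' dotpZl wuj /enorm Wdef mulrC.
have hi' : on_sphere ui'.
  rewrite /on_sphere /ui' dotpZl dotpZr /enorm Wdef mulrA -expr2 exprVn sqr_sqrtr ?ltW //.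
  by rewrite mulVf // gt_eqF.
rewrite eff_abs ?cs // ui'uj.
exact: core.
Qed.
End S.

Unset Implicit Arguments. Set Strict Implicit.
Theorem mainTheorem19 (R : realType) (f : R -> R) :
  stable f ->
  forall delta : R, 0 < delta ->
  exists c0 : R, 0 < c0 < 1 /\
    forall (d : nat) (ui uj : 'rV[R]_d),
      on_sphere ui -> on_sphere uj ->
      eff_angle ui uj <= pi / 2 - delta ->
      let w := ui + f (dotp ui uj) *: uj in
      let ui' := (enorm w)^-1 *: w in
      eff_angle ui' uj <= c0 * eff_angle ui uj.
Proof.
move=> fs delta d0.
have p0 : 0 < pi / 2 :> R by rewrite divr_gt0 // pi_gt0.
have m0 : 0 < Num.min delta (pi / 2) by rewrite lt_min d0 p0.
have m1 : Num.min delta (pi / 2) <= pi / 2 by rewrite ge_min lexx orbT.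
have [c0 [hc H]] := @main_small R f fs (Num.min delta (pi / 2)) m0 m1.
exists c0; split => // d ui uj hi hj he.
apply: H => //; apply: (le_trans he).
by rewrite lerB // ge_min lexx.
Qed.
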